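(* Let $X$ be a complex Banach space. Let $\mathcal{G}$ be an algebra with unit, $\mathcal{F}$ a unital subalgebra of $\mathcal{G}$, $\Phi:\mathcal{F}\to\mathcal{C}(X)$ a calculus, and $\mathcal{E}\subseteq\mathcal{F}$ a subalgebra which is an algebraic core for $\Phi$. Let $\mathcal{E}'$ be a subalgebra of $\mathcal{G}$ with $\mathcal{E}\subseteq\mathcal{E}'$ and $\Psi:\mathcal{E}'\to\mathcal{L}(X)$ an algebra representation with $\Psi|_{\mathcal{E}}=\Phi|_{\mathcal{E}}$. Let $\mathcal{F}':=\mathrm{anc}(\mathcal{E}',\mathcal{G},\Psi)$ and denote again by $\Psi:\mathcal{F}'\to\mathcal{C}(X)$ the unique calculus on $\mathcal{F}'$ extending $\Psi$. Let $f\in\mathcal{F}$. Then $f\in\mathcal{F}'$ and $\Phi(f)=\Psi(f)$ if any one of the following conditions holds: (1) $f\in\mathcal{F}'$ and $\Psi(f)\in\mathcal{L}(X)$; (2) $f\in\mathcal{F}'$, $\Psi(f)$ is densely defined, and $\Phi(f)\in\mathcal{L}(X)$; (3) for each $e'\in\mathcal{E}'$ there is a $\Psi$-anchor set $\mathcal{M}_{e'}\subseteq\mathcal{E}'$ such that $\mathcal{M}_{e'}e'\subseteq\mathcal{D}'\cdot[f]_{\mathcal{E}}$, where $\mathcal{D}':=\{d'\in\mathcal{F}': d'\mathcal{E}\subseteq\mathcal{E}'\}$; (4) $\mathcal{E}'=\mathcal{E}$; (5) $\mathrm{Z}(\mathcal{E}')\cap[f]_{\mathcal{E}}$ is a $\Psi$-anchor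 set; (6) $\mathcal{E}\subseteq\mathrm{Z}(\mathcal{E}')$; (7) $\mathcal{E}'$ is commutative.
   Context: Algebras need not be commutative; subalgebras need not be unital. $\mathcal{L}(X)$, $\mathcal{C}(X)$: bounded, resp. closed linear operators on $X$; operator inclusions are graph inclusions, sums/products have natural domains, ''$Tx=y$'' means $x\in\mathrm{dom}(T)$, $Tx=y$. Proto-calculus $\Phi:\mathcal{F}\to\mathcal{C}(X)$: (FC1) $\Phi(\mathbf{1})=I$; (FC2) $\lambda\Phi(f)\subseteq\Phi(\lambda f)$, $\Phi(f)+\Phi(g)\subseteq\Phi(f+g)$; (FC3) $\Phi(f)\Phi(g)\subseteq\Phi(fg)$, $\mathrm{dom}(\Phi(f)\Phi(g))=\mathrm{dom}(\Phi(g))\cap\mathrm{dom}(\Phi(fg))$. For a subset $\mathcal{E}$ and element $f$, $[f]_{\mathcal{E}}=\{e\in\mathcal{E}:ef\in\mathcal{E}\}$. $\mathcal{E}\subseteq\{g:\Phi(g)\in\mathcal{L}(X)\}$ is an algebraic core for $\Phi$ if for all $f\in\mathcal{F}$, $x,y\in X$: $\Phi(f)x=y\iff\Phi(ef)x=\Phi(e)y$ for all $e\in[f]_{\mathcal{E}}$; a calculus is a proto-calculus for which the set of $\Phi$-bounded elements is an algebraic core. For a representation $\Psi$ on $\mathcal{E}'$, a $\Psi$-anchor set is a nonempty $\mathcal{M}\subseteq\mathcal{E}'$ with $\bigcap_{e\in\mathcal{M}}\ker\Psi(e)=\{0\}$. $\mathrm{anc}(\mathcal{E}',\mathcal{G},\Psi):=\{g\in\mathcal{G}: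 [e'g]_{\mathcal{E}'}$ is a $\Psi$-anchor set for all $e'\in\mathcal{E}'\}$; in the present situation this is a unital subalgebra of $\mathcal{G}$ containing $\mathcal{E}'$, and the calculus extending $\Psi$ to it is given by $\Psi(g)x=y\iff\Psi(e'g)x=\Psi(e')y$ for all $e'\in[g]_{\mathcal{E}'}$. $\mathrm{Z}(\mathcal{E}')=\{d\in\mathcal{E}': de=ed\ \forall e\in\mathcal{E}'\}$ is the center. $\mathcal{D}'\cdot[f]_{\mathcal{E}}=\{de: d\in\mathcal{D}', e\in[f]_{\mathcal{E}}\}$. *)

(* Defs.v *)
From HB Require Import structures.
From mathcomp Require Import all_boot all_order all_algebra.
From mathcomp Require Import all_classical all_reals topology normedtype.
From mathcomp Require Import complex.

Set Implicit Arguments.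
Unset Strict Implicit.
Unset Printing Implicit Defensive.

Import Order.TTheory GRing.Theory Num.Theory.
Local Open Scope ring_scope.
Local Open Scope classical_set_scope.

(* "T x y" reads "x \in dom T and T x = y".                            *)
Section Operators.
Variables (R : realType) (X : normedModType R[i]).

Definition op := X -> X -> Prop.

Definition op_dom (T : op) : set X := [set x | exists y, T x y].

Definition op_sub (S T : op) : Prop := forall x y, S x y -> T x y.
Definition op_eq (S T : op) : Prop := forall x y, S x y <-> T x y.

Definition op_id : op := fun x y => y = x.

Definition op_add (S T : op) : op :=
  fun x y => exists y1 y2, [/\ S x y1, T x y2 & y = y1 + y2].
Definition op_scale (l : R[i]) (T : op) : op :=
  fun x y => exists y', T x y' /\ y = l *: y'.
(* op_comp S T = S T  (first T, then S) *)
Definition op_comp (S T : op) : op :=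
  fun x z => exists y, T x y /\ S y z.

Definition is_linop (T : op) : Prop :=
  [/\ T 0 0,
      (forall (a : R[i]) x y x' y', T x y -> T x' y' ->
          T (a *: x + x') (a *: y + y'))
    & (forall x y y', T x y -> T x y' -> y = y')].

Definition is_closed_op (T : op) : Prop :=
  is_linop T /\ closed [set p : X * X | T p.1 p.2].

Definition is_bounded_op (T : op) : Prop :=
  exists A : X -> X,
    [/\ (forall (a : R[i]) u v, A (a *: u + v) = a *: A u + A v),
        continuous A
      & forall x y, T x y <-> y = A x].

Definition densely_defined (T : op) : Prop := closure (op_dom T) = setT.

End Operators.

Section Calculus.
Variables (R : realType) (X : normedModType R[i]) (G : algType R[i]).

Definition is_subalgebra (S : set G) : Prop :=
  [/\ S 0,
      (forall a b, S a -> S b -> S (a + b)),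
      (forall a b, S a -> S b -> S (a * b))
    & (forall (l : R[i]) a, S a -> S (l *: a))].

Definition is_unital_subalgebra (S : set G) : Prop := is_subalgebra S /\ S 1.

Definition bracket (E : set G) (f : G) : set G := [set e | E e /\ E (e * f)].

Definition is_proto_calculus (F : set G) (Phi : G -> op X) : Prop :=
  [/\ (forall f, F f -> is_closed_op (Phi f)),
      op_eq (Phi 1) (@op_id R X),
      (forall (l : R[i]) f, F f -> op_sub (op_scale l (Phi f)) (Phi (l *: f))),
      (forall f g, F f -> F g -> op_sub (op_add (Phi f) (Phi g)) (Phi (f + g)))
    &
      ((forall f g, F f -> F g -> op_sub (op_comp (Phi f) (Phi g)) (Phi (f * g))) /\
       (forall f g, F f -> F g ->
          op_dom (op_comp (Phi f) (Phi g)) = op_dom (Phi g) `&` op_dom (Phi (f * g))))].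

Definition bounded_elems (F : set G) (Phi : G -> op X) : set G :=
  [set g | F g /\ is_bounded_op (Phi g)].

Definition algebraic_core (F : set G) (Phi : G -> op X) (E : set G) : Prop :=
  E `<=` bounded_elems F Phi /\
  forall f, F f -> forall x y,
    Phi f x y <->
    (forall e, bracket E f e -> exists w, Phi e y w /\ Phi (e * f) x w).

Definition is_calculus (F : set G) (Phi : G -> op X) : Prop :=
  is_proto_calculus F Phi /\ algebraic_core F Phi (bounded_elems F Phi).

Definition is_representation (E' : set G) (Psi : G -> op X) : Prop :=
  [/\ (forall e, E' e -> is_bounded_op (Psi e)),
      (forall a b, E' a -> E' b -> op_eq (Psi (a + b)) (op_add (Psi a) (Psi b))),
      (forall a b, E' a -> E' b -> op_eq (Psi (a * b)) (op_comp (Psi a) (Psi b)))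
    & (forall (l : R[i]) a, E' a -> op_eq (Psi (l *: a)) (op_scale l (Psi a)))].

Definition anchor_set (E' : set G) (Psi : G -> op X) (M : set G) : Prop :=
  [/\ M `<=` E', M !=set0 & forall x : X, (forall e, M e -> Psi e x 0) -> x = 0].

Definition anc (E' : set G) (Psi : G -> op X) : set G :=
  [set g | forall e', E' e' -> anchor_set E' Psi (bracket E' (e' * g))].

Definition anc_calc (E' : set G) (Psi : G -> op X) : G -> op X :=
  fun g x y => forall e', bracket E' g e' -> exists w, Psi e' y w /\ Psi (e' * g) x w.

Definition alg_center (E' : set G) : set G :=
  [set d | E' d /\ forall e, E' e -> d * e = e * d].

End Calculus.

(* Main.v *)
Require Import Defs.
From HB Require Import structures.
From mathcomp Require Import all_boot all_order all_algebra.
From mathcomp Require Import all_classical all_reals topology normedtype.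
From mathcomp Require Import complex.
Import Order.TTheory GRing.Theory Num.Theory.
Local Open Scope ring_scope.
Local Open Scope classical_set_scope.

Definition bop {R : realType} {X : normedModType R[i]} (T : op X) (x : X) : X :=
  xget 0 (T x).

Lemma bop_spec {R : realType} {X : normedModType R[i]} {T : op X} :
  is_bounded_op T ->
  [/\ (forall (a : R[i]) u v, bop T (a *: u + v) = a *: bop T u + bop T v),
      continuous (bop T)
    & forall x y, T x y <-> y = bop T x].
Proof.
move=> [A [Alin Acont HA]].
have E : bop T = A.
  apply: funext => x; rewrite /bop.
  have : T x (xget 0 (T x)) by apply: xgetPex; exists (A x); exact/HA.
  by move/HA.
by rewrite E; split.
Qed.

Lemma bop0 {R : realType} {X : normedModType R[i]} {T : op X} :
  is_bounded_op T -> bop T 0 = 0.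
Proof.
move/bop_spec=> [L _ _].
have := L 1 0 0; rewrite !scale1r addr0 => h.
by apply: (addrI (bop T 0)); rewrite -h addr0.
Qed.

Lemma bopB {R : realType} {X : normedModType R[i]} {T : op X} u v :
  is_bounded_op T -> bop T (u - v) = bop T u - bop T v.
Proof.
move=> hT; have [L _ _] := bop_spec hT.
have hN : bop T (- v) = - bop T v.
  by have := L (-1) v 0; rewrite addr0 bop0 // addr0 !scaleN1r.
by have := L 1 u (- v); rewrite !scale1r hN.
Qed.

Lemma bopT {R : realType} {X : normedModType R[i]} {T : op X} x :
  is_bounded_op T -> T x (bop T x).
Proof. by move/bop_spec=> [_ _ H]; apply/H. Qed.

Lemma bopP {R : realType} {X : normedModType R[i]} {T : op X} x y :
  is_bounded_op T -> T x y -> y = bop T x.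
Proof. by move/bop_spec=> [_ _ H]; move/H. Qed.

Lemma anchor_sup {R : realType} {X : normedModType R[i]} {G : algType R[i]}
  {E' : set G} {Psi : G -> op X} {M N : set G} :
  anchor_set E' Psi M -> M `<=` N -> N `<=` E' -> anchor_set E' Psi N.
Proof.
move=> [_ [m Mm] H] MN NE; split => //; first by exists m; exact: MN.
by move=> x Hx; apply: H => e Me; apply: Hx; exact: MN.
Qed.
Theorem theorem6p7 (R : realType) (X : completeNormedModType R[i])
  (G : algType R[i]) (F E E' : set G) (Phi Psi : G -> op X) (f : G) :
  is_unital_subalgebra F ->
  is_calculus F Phi ->
  is_subalgebra E -> E `<=` F ->
  algebraic_core F Phi E ->
  is_subalgebra E' -> E `<=` E' ->
  is_representation E' Psi ->
  (forall e, E e -> op_eq (Psi e) (Phi e)) ->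
  F f ->
  let F' := anc E' Psi in
  let PsiF := anc_calc E' Psi in
  let D' := [set d | F' d /\ forall e, E e -> E' (d * e)] in
  (   (* (1) *) (F' f /\ is_bounded_op (PsiF f))
   \/ (* (2) *) [/\ F' f, densely_defined (PsiF f) & is_bounded_op (Phi f)]
   \/ (* (3) *) (forall e', E' e' -> exists M, anchor_set E' Psi M /\
                  forall m, M m -> exists d e, [/\ D' d, bracket E f e & m * e' = d * e])
   \/ (* (4) *) E' = E
   \/ (* (5) *) anchor_set E' Psi (alg_center E' `&` bracket E f)%classic
   \/ (* (6) *) E `<=` alg_center E'
   \/ (* (7) *) (forall a b, E' a -> E' b -> a * b = b * a)) ->
  F' f /\ op_eq (Phi f) (PsiF f).
Proof.
move=> [[F0 FD FM FZ] F1] [[Fcl FC1 FC2a FC2b [FC3 FC3d]] Fcore]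
  [E0 ED EM EZ] EF [EsubB Ecore] [E'0 E'D E'M E'Z] EE' [Pb PD PM PZ] PhiPsi Ff.
move=> F' PsiF D' Hcases.
have EB : forall e, E e -> is_bounded_op (Phi e).
  by move=> e /EsubB [].
have Psv : forall g, F g -> forall x y y', Phi g x y -> Phi g x y' -> y = y'.
  by move=> g /Fcl [[_ _ H] _]; exact: H.
have Pg0 : forall g, F g -> Phi g 0 0.
  by move=> g /Fcl [[H _ _] _].
pose P e := bop (Psi e).
have PMl : forall a b x, E' a -> E' b -> P (a * b) x = P a (P b x).
  move=> a b x Ha Hb; apply: esym; apply: bopP; first exact: (Pb _ (E'M _ _ Ha Hb)).
  apply/(PM _ _ Ha Hb); exists (P b x); split; apply: bopT; exact: Pb.
have PBl : forall a u v, E' a -> P a (u - v) = P a u - P a v.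
  by move=> a u v Ha; apply: bopB; exact: Pb.
have PT : forall a x, E' a -> Psi a x (P a x) by move=> a x Ha; apply: bopT; exact: Pb.
have PP : forall a x y, E' a -> Psi a x y -> y = P a x.
  by move=> a x y Ha; apply: bopP; exact: Pb.
have core0 : forall g, F g -> forall x, (forall e, bracket E g e -> Phi e x 0) -> x = 0.
  move=> g Fg x Hx.
  have : Phi g 0 x.
    apply/(Ecore g Fg) => e He; exists 0; split; first exact: Hx.
    have := bopT 0 (EB _ (proj2 He)); rewrite bop0; [by [] | exact: EB (proj2 He)].
  by move=> H; apply: (Psv g Fg 0 x 0 H); exact: Pg0.
have rev : forall x y, PsiF f x y -> Phi f x y.
  move=> x y H; apply/(Ecore f Ff) => e [Ee Eef].
  have [w [h1 h2]] := H e (conj (EE' _ Ee) (EE' _ Eef)).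
  by exists w; split; apply/PhiPsi.
suff [HF' Hfwd] : F' f /\ (forall x y, Phi f x y -> PsiF f x y).
  by split => // x y; split; [exact: Hfwd | exact: rev].
have tot2fwd : (forall x, exists y, PsiF f x y) -> forall x y, Phi f x y -> PsiF f x y.
  move=> Htot x y H; have [y' Hy'] := Htot x.
  by rewrite (Psv f Ff x y y' H (rev _ _ Hy')).
pose H3 := forall e', E' e' -> exists M, anchor_set E' Psi M /\
   forall m, M m -> exists d e, [/\ D' d, bracket E f e & m * e' = d * e].
have case3 : H3 -> F' f /\ (forall x y, Phi f x y -> PsiF f x y).
  move=> H3f.
  have Z0 : forall x, (forall e, E' e -> Psi e x 0) -> x = 0.
    have [M [[ME' _ HM] _]] := H3f 0 E'0.
    by move=> x Hx; apply: HM => e Me; exact: Hx (ME' _ Me).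
  have keyD : forall d e x y, F' d -> E e -> E' (d*e) -> E' (d*(e*f)) -> E (e*f) ->
      P e y = P (e*f) x -> P (d*e) y = P (d*(e*f)) x.
    move=> d e x y Fd Ee Ede Edef Eef Heq.
    apply/eqP; rewrite -subr_eq0; apply/eqP; apply: Z0 => e'' He''.
    suff : P e'' (P (d*e) y - P (d*(e*f)) x) = 0 by move=> <-; exact: PT.
    have [_ _ HA] := Fd e'' He''.
    apply: HA => k [Ek Eked].
    suff : P k (P e'' (P (d*e) y - P (d*(e*f)) x)) = 0 by move=> <-; exact: PT.
    have Eke : E' (k * e'') by exact: E'M.
    rewrite -(PMl k e'') // PBl // -(PMl (k*e'') (d*e)) // -(PMl (k*e'') (d*(e*f))) //.
    have -> : k*e''*(d*e) = (k*(e''*d))*e by rewrite !mulrA.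
    have -> : k*e''*(d*(e*f)) = (k*(e''*d))*(e*f) by rewrite !mulrA.
    rewrite (PMl (k*(e''*d)) e) ?(PMl (k*(e''*d)) (e*f)) ?Heq ?subrr //; exact: EE'.
  split.
    move=> e' Ee'; have [M [AM HMd]] := H3f e' Ee'.
    apply: (anchor_sup AM); last by move=> z [].
    move=> m Mm; have [ME' _ _] := AM.
    have [d [e [[Fd Dd] [Ee Eef] Hme]]] := HMd m Mm.
    split; first exact: ME'.
    by rewrite mulrA Hme -(mulrA d e f); exact: Dd.
  move=> x y H e' [Ee' Ee'f].
  exists (P e' y); split; first exact: PT.
  suff -> : P e' y = P (e'*f) x by exact: PT.
  apply/eqP; rewrite -subr_eq0; apply/eqP.
  have [M [[ME' _ HM] HMd]] := H3f e' Ee'.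
  apply: HM => m Mm.
  have Em := ME' _ Mm.
  suff : P m (P e' y - P (e'*f) x) = 0 by move=> <-; exact: PT.
  have [d [e [[Fd Dd] [Ee Eef] Hme]]] := HMd m Mm.
  rewrite PBl // -(PMl m e') // -(PMl m (e'*f)) //.
  rewrite mulrA Hme -(mulrA d e f).
  have [w [h1 h2]] := (proj1 (Ecore f Ff x y) H) e (conj Ee Eef).
  have h1' := PP _ _ _ (EE' _ Ee) (proj2 (PhiPsi e Ee _ _) h1).
  have h2' := PP _ _ _ (EE' _ Eef) (proj2 (PhiPsi _ Eef _ _) h2).
  rewrite (keyD d e x y) ?subrr //; [exact: Dd | exact: Dd | by rewrite -h1' -h2'].
have case5 : anchor_set E' Psi (alg_center E' `&` bracket E f) -> H3.
  move=> AZ e' Ee'; exists (alg_center E' `&` bracket E f); split => //.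
  move=> m [[Em Cm] Bm].
  exists e', m; split => //; last exact: Cm.
  split.
  - move=> e'' Ee''; apply: (anchor_sup AZ); last by move=> z [].
    by move=> z [[Ez _] _]; split => //; exact: (E'M _ _ Ez (E'M _ _ Ee'' Ee')).
  - by move=> e Ee; apply: E'M => //; exact: EE'.
have case6 : E `<=` alg_center E' -> anchor_set E' Psi (alg_center E' `&` bracket E f).
  move=> HE; split.
  - by move=> z [[]].
  - exists 0; split; first by split => // e _; rewrite mul0r mulr0.
    by split; rewrite ?mul0r; exact: E0.
  - move=> x Hx; apply: (core0 f Ff) => e [Ee Eef]; apply/(PhiPsi e Ee).
    by apply: Hx; split => //; exact: HE.
have case4 : E' = E -> H3.
  move=> HEE.
  have anc4 : forall g, F g -> forall e'', E' e'' -> anchor_set E' Psi (bracket E' (e''*g)).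
    move=> g Fg e'' Ee''; split.
    - by move=> z [].
    - by exists 0; split; rewrite ?mul0r; exact: E'0.
    - move=> x Hx; apply: (core0 (e''*g)).
        by apply: FM => //; apply: EF; rewrite -HEE.
      move=> e [Ee Eeg]; apply/(PhiPsi e Ee); apply: Hx; rewrite HEE; by split.
  move=> e' Ee'; exists (bracket E' (e'*f)); split; first exact: (anc4 f Ff e' Ee').
  move=> m [Em Emf]; exists 1, (m*e'); split; last by rewrite mul1r.
  - split; first exact: (anc4 1 F1).
    by move=> e Ee; rewrite mul1r; exact: EE'.
  - rewrite -HEE; split; [exact: E'M | by rewrite -mulrA].
case: Hcases => [[HF HB]|[[HF Hd HB]|[H|[H|[H|[H|H]]]]]].
- split => //; apply: tot2fwd => x; have [_ _ HS] := bop_spec HB.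
  by exists (bop (PsiF f) x); exact/HS.
- split => //; apply: tot2fwd.
  have [Alin Acont HA] := bop_spec HB.
  set A := bop (Phi f) in Alin Acont HA.
  suff Hdom : op_dom (PsiF f) = setT.
    by move=> x; have : op_dom (PsiF f) x by rewrite Hdom.
  have eqdom : op_dom (PsiF f) =
      \bigcap_(e' in bracket E' f) [set x | P e' (A x) - P (e'*f) x = 0].
    apply/seteqP; split.
    - move=> x [y Hy] e' He'; have hy := proj1 (HA x y) (rev _ _ Hy).
      have [w [h1 h2]] := Hy e' He'.
      by rewrite /= -hy -(PP _ _ _ (proj1 He') h1) -(PP _ _ _ (proj2 He') h2) subrr.
    - move=> x Hx; exists (A x) => e' He'; exists (P e' (A x)); split.
        exact: PT (proj1 He').
      have := Hx e' He'; move/eqP; rewrite subr_eq0 => /eqP ->; exact: PT (proj2 He').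
  have cl : closed (op_dom (PsiF f)).
    rewrite eqdom; apply: closed_bigI => e' [Ee' Ee'f].
    have [_ c1 _] := bop_spec (Pb _ Ee').
    have [_ c2 _] := bop_spec (Pb _ Ee'f).
    have cont : continuous (fun x => P e' (A x) - P (e'*f) x).
      move=> z; apply: (@continuousB _ _ _ (P e' \o A) (P (e'*f)) z); last exact: c2.
      by apply: continuous_comp; [exact: Acont | exact: c1].
    move/continuous_closedP: cont => /(_ [set 0]); apply.
    apply: accessible_closed_set1; apply: hausdorff_accessible; exact: norm_hausdorff.
  by rewrite (proj1 (closure_id _) cl).
- exact: case3.
- exact: case3 (case4 H).
- exact: case3 (case5 H).
- exact: case3 (case5 (case6 H)).
- apply: case3 (case5 (case6 _)) => e Ee; split; first exact: EE'.
  by move=> e0 He0; apply: H => //; exact: EE'.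
Qed.
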